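(* The collection $\mathbf{FinCorel}^\circ$ of corelations is closed under composition and tensor in $\mathbf{FinCorel}$ and contains all identities and symmetries; hence $\mathbf{FinCorel}^\circ$ is a sub-PROP of $\mathbf{FinCorel}$.
   Context: A PROP is a strict symmetric monoidal category whose monoid of objects is $(\mathbb{N},+,0)$. Write $\underline{m}=\{1,\dots,m\}$. $\mathbf{FinCorel}$ is the PROP whose morphisms $m\to n$ are equivalence relations on $\underline{m}\sqcup\underline{n}$; the composite of $R:m\to n$ and $S:n\to p$ is the restriction to $\underline{m}\sqcup\underline{p}$ of the equivalence relation generated by $R\cup S$ on $\underline{m}\sqcup\underline{n}\sqcup\underline{p}$; tensor is disjoint union with reindexing by addition; the identity at $n$ identifies each input $i$ with output $i$; symmetries are transposition corelations. $\mathbf{FinCorel}^\circ$ consists of those corelations $R:m\to n$ such that (a) every equivalence class of $R$ contains exactly one element of $\underline{m}$ and (b) every equivalence class contains at least one element of $\underline{n}$. *)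

(* Defs.v *)
From mathcomp Require Import all_boot.
Set Implicit Arguments. Unset Strict Implicit. Unset Printing Implicit Defensive.

(* The set  m ⊔ n  of a corelation m -> n is the finite type 'I_m + 'I_n:
   inputs are inl i, outputs are inr j (0-based indexing of {1..m}). *)
Definition corel_carrier (m n : nat) : finType := ('I_m + 'I_n)%type.

Definition is_corel (m n : nat) (R : rel (corel_carrier m n)) : Prop :=
  reflexive R /\ symmetric R /\ transitive R.

Definition cmp_toR (m n p : nat) (x : ('I_m + 'I_n + 'I_p)%type)
  : option ('I_m + 'I_n) :=
  match x with
  | inl (inl i) => Some (inl i)
  | inl (inr j) => Some (inr j)
  | inr _ => None
  end.

Definition cmp_toS (m n p : nat) (x : ('I_m + 'I_n + 'I_p)%type)
  : option ('I_n + 'I_p) :=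
  match x with
  | inl (inl _) => None
  | inl (inr j) => Some (inl j)
  | inr k => Some (inr k)
  end.

Definition opt_rel (T : Type) (R : rel T) (a b : option T) : bool :=
  match a, b with Some a', Some b' => R a' b' | _, _ => false end.

(* R ∪ S viewed as a relation on m ⊔ n ⊔ p *)
Definition cmp_edge (m n p : nat) (R : rel (corel_carrier m n))
  (S : rel (corel_carrier n p)) : rel ('I_m + 'I_n + 'I_p)%type :=
  fun x y => opt_rel R (cmp_toR x) (cmp_toR y) || opt_rel S (cmp_toS x) (cmp_toS y).

Definition cmp_gen (m n p : nat) (R : rel (corel_carrier m n))
  (S : rel (corel_carrier n p)) : rel ('I_m + 'I_n + 'I_p)%type :=
  connect (fun x y => cmp_edge R S x y || cmp_edge R S y x).

Definition cmp_embed (m n p : nat) (x : corel_carrier m p) : ('I_m + 'I_n + 'I_p)%type :=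
  match x with inl i => inl (inl i) | inr k => inr k end.

Definition corel_comp (m n p : nat) (R : rel (corel_carrier m n))
  (S : rel (corel_carrier n p)) : rel (corel_carrier m p) :=
  fun x y => cmp_gen R S (cmp_embed n x) (cmp_embed n y).

Definition tns_part (m n m' n' : nat) (x : corel_carrier (m + m') (n + n'))
  : (corel_carrier m n + corel_carrier m' n')%type :=
  match x with
  | inl i => match split i with inl a => inl (inl a) | inr b => inr (inl b) end
  | inr j => match split j with inl a => inl (inr a) | inr b => inr (inr b) end
  end.

Definition corel_tensor (m n m' n' : nat) (R : rel (corel_carrier m n))
  (R' : rel (corel_carrier m' n')) : rel (corel_carrier (m + m') (n + n')) :=
  fun x y =>
    match tns_part x, tns_part y with
    | inl a, inl b => R a b
    | inr a, inr b => R' a b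
    | _, _ => false
    end.

Definition id_label (n : nat) (x : corel_carrier n n) : 'I_n :=
  match x with inl i => i | inr j => j end.

Definition corel_id (n : nat) : rel (corel_carrier n n) :=
  fun x y => id_label x == id_label y.

(* ---- symmetry sigma_{m,n} : m + n -> n + m ----
   each element is labelled by its wire in 'I_m + 'I_n:
   input k of m+n is wire split k; output l of n+m is wire
   inr b if l = b < n, and inl a if l = n + a. *)
Definition sym_label (m n : nat) (x : corel_carrier (m + n) (n + m)) : ('I_m + 'I_n)%type :=
  match x with
  | inl k => split k
  | inr l => match split l with inl b => inr b | inr a => inl a end
  end.

Definition corel_sym (m n : nat) : rel (corel_carrier (m + n) (n + m)) :=
  fun x y => sym_label x == sym_label y.

Definition in_FinCorel_circ (m n : nat) (R : rel (corel_carrier m n)) : Prop :=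
  is_corel R /\
  forall x : corel_carrier m n,
    #|[set i : 'I_m | R x (inl i)]| = 1 /\ exists j : 'I_n, R x (inr j).

Arguments corel_id n : clear implicits.
Arguments corel_sym m n : clear implicits.

(* Main.v *)
Require Import Defs.
From mathcomp Require Import all_boot.
Set Implicit Arguments. Unset Strict Implicit. Unset Printing Implicit Defensive.

Lemma card1_intro (T : finType) (P : pred T) (i : T) :
  P i -> (forall k, P k -> k = i) -> #|[set k | P k]| = 1.
Proof.
move=> Pi Hu; have -> : [set k | P k] = [set i]; last by rewrite cards1.
apply/setP=> k; rewrite !inE; apply/idP/eqP => [/Hu //| ->]; exact: Pi.
Qed.

Lemma card1_elim (T : finType) (P : pred T) :
  #|[set k | P k]| = 1 -> exists i, forall k, P k = (k == i).
Proof.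
move/eqP/cards1P=> [i Hi]; exists i => k.
by have := f_equal (fun A : {set T} => k \in A) Hi; rewrite !inE.
Qed.

Lemma split_lshift m n (a : 'I_m) : split (lshift n a) = inl a.
Proof. exact: (unsplitK (inl a : 'I_m + 'I_n)). Qed.

Lemma split_rshift m n (a : 'I_n) : split (rshift m a) = inr a.
Proof. exact: (unsplitK (inr a : 'I_m + 'I_n)). Qed.

Lemma connect_inv (T : finType) (U : Type) (f : T -> U) (e : rel T) :
  (forall x y, e x y -> f x = f y) -> forall x y, connect e x y -> f x = f y.
Proof.
move=> H x y /connectP [p pth ->]; elim: p x pth => //= a p IH x /andP [exa pth].
by rewrite (H _ _ exa); apply: IH.
Qed.

Lemma pickR m n (R : rel (corel_carrier m n)) : in_FinCorel_circ R ->
  forall z i, ([pick i | R z (inl i)] == Some i) = R z (inl i).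
Proof.
move=> [_ H] z i; have [i0 Hi0] := card1_elim (P := fun i => R z (inl i)) (proj1 (H z)).
case: pickP => [k Hk | Hn].
- rewrite Hi0 in Hk; move/eqP: Hk => ->; rewrite Hi0 /= eq_sym //.
- by have := Hn i0; rewrite Hi0 eqxx.
Qed.

Lemma comp_ok (m n p : nat) (R : rel (corel_carrier m n)) (S : rel (corel_carrier n p)) :
  in_FinCorel_circ R -> in_FinCorel_circ S -> in_FinCorel_circ (corel_comp R S).
Proof.
move=> hR hS.
have [[rR [sR tR]] cR] := hR; have [[rS [sS tS]] cS] := hS.
pose LR := fun z => [pick i | R z (inl i)].
pose LS := fun w => [pick j | S w (inl j)].
have LRP : forall z i, (LR z == Some i) = R z (inl i) by exact: pickR.
have LSP : forall z i, (LS z == Some i) = S z (inl i) by exact: pickR.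
have LReq : forall a b, R a b -> LR a = LR b.
  move=> a b Hab; apply: eq_pick => i /=; apply/idP/idP => H.
  - by apply: tR H; rewrite sR.
  - by apply: tR H.
have LSeq : forall a b, S a b -> LS a = LS b.
  move=> a b Hab; apply: eq_pick => i /=; apply/idP/idP => H.
  - by apply: tS H; rewrite sS.
  - by apply: tS H.
pose L := fun z : ('I_m + 'I_n + 'I_p)%type => match z with
  | inl w => LR w | inr k => obind (fun j => LR (inr j)) (LS (inr k)) end.
have LRi : forall i, LR (inl i) = Some i by move=> i; apply/eqP; rewrite LRP.
have LSj : forall j, LS (inl j) = Some j by move=> j; apply/eqP; rewrite LSP.
have Ltr : forall x, match cmp_toR x with Some w => L x = LR w | None => True end.
  by case=> [[i|j]|k].
have Lts : forall x, match cmp_toS x with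
    Some w => L x = obind (fun j => LR (inr j)) (LS w) | None => True end.
  by case=> [[i|j]|k] //=; rewrite LSj.
pose e := fun x y => cmp_edge R S x y || cmp_edge R S y x.
have edgeL : forall x y, cmp_edge R S x y -> L x = L y.
  move=> x y; rewrite /cmp_edge; case/orP.
  - have := Ltr x; have := Ltr y.
    case: (cmp_toR x) => [a|] //; case: (cmp_toR y) => [b|] //= -> -> Hab.
    exact: LReq.
  - have := Lts x; have := Lts y.
    case: (cmp_toS x) => [a|] //; case: (cmp_toS y) => [b|] //= -> -> Hab.
    by rewrite (LSeq _ _ Hab).
have eL : forall x y, e x y -> L x = L y.
  by move=> x y /orP [] H; [|symmetry]; apply: edgeL.
have connL := connect_inv eL.
have stepR : forall a b, R a b -> connect e (inl a) (inl b).
  move=> a b H; apply: connect1; rewrite /e /cmp_edge.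
  by case: a b H => [i|j] [i'|j'] H /=; rewrite H.
pose embS := fun w : ('I_n + 'I_p)%type =>
  match w with inl j => (inl (inr j) : ('I_m + 'I_n + 'I_p)%type) | inr k => inr k end.
have stepS : forall a b, S a b -> connect e (embS a) (embS b).
  move=> a b H; apply: connect1; rewrite /e /cmp_edge.
  by case: a b H => [i|j] [i'|j'] H /=; rewrite H ?orbT.
split.
  split; first by move=> x; exact: connect0.
  split; last by move=> y x z; apply: connect_trans.
  move=> x y; rewrite /corel_comp /cmp_gen; apply: sym_connect_sym.
  by move=> a b; rewrite orbC.
move=> x.
have [i0 Hx] : exists i0, connect e (cmp_embed n x) (inl (inl i0)).
  case: x => [i|k]; first by exists i; exact: connect0.
  have [j0 Hj0] := card1_elim (P := fun j => S (inr k) (inl j)) (proj1 (cS (inr k))).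
  have [i0 Hi0] := card1_elim (P := fun i => R (inr j0) (inl i)) (proj1 (cR (inr j0))).
  exists i0; apply: (connect_trans (y := embS (inl j0))).
    by apply: (stepS (inr k)); rewrite Hj0.
  by apply: stepR; rewrite Hi0.
have LX : L (cmp_embed n x) = Some i0 by rewrite (connL _ _ Hx) /= LRi.
split.
  apply: (card1_intro (i := i0)); first exact: Hx.
  move=> k Hk; have := connL _ _ Hk; rewrite LX /= LRi; by case.
have [j Hj] := (proj2 (cR (inl i0))).
have [k Hk] := (proj2 (cS (inl j))).
exists k; apply: (connect_trans Hx); apply: (connect_trans (stepR _ _ Hj)).
exact: (stepS (inl j) (inr k) Hk).
Qed.

Lemma tensor_ok (m n m' n' : nat) (R : rel (corel_carrier m n)) (R' : rel (corel_carrier m' n')) :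
  in_FinCorel_circ R -> in_FinCorel_circ R' -> in_FinCorel_circ (corel_tensor R R').
Proof.
move=> [[rR [sR tR]] cR] [[rR' [sR' tR']] cR'].
split.
  split; first by move=> x; rewrite /corel_tensor; case: (tns_part x).
  split.
    by move=> x y; rewrite /corel_tensor; case: (tns_part x) => a; case: (tns_part y) => b.
  move=> y x z; rewrite /corel_tensor.
  case: (tns_part x) => a; case: (tns_part y) => b; case: (tns_part z) => c //; apply: tR || apply: tR'.
move=> x; rewrite /corel_tensor; case hx: (tns_part x) => [a|a].
- have [i0 Hi0] := card1_elim (P := fun i => R a (inl i)) (proj1 (cR a)).
  split.
    apply: (card1_intro (i := lshift m' i0)); first by rewrite /= split_lshift Hi0.
    move=> k /=; case hs: (split k) => [a'|b'] //; rewrite Hi0 => /eqP Ha.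
    by rewrite -(splitK k) hs Ha.
  have [j Hj] := proj2 (cR a); exists (lshift n' j); by rewrite /= split_lshift.
- have [i0 Hi0] := card1_elim (P := fun i => R' a (inl i)) (proj1 (cR' a)).
  split.
    apply: (card1_intro (i := rshift m i0)); first by rewrite /= split_rshift Hi0.
    move=> k /=; case hs: (split k) => [a'|b'] //; rewrite Hi0 => /eqP Ha.
    by rewrite -(splitK k) hs Ha.
  have [j Hj] := proj2 (cR' a); exists (rshift n j); by rewrite /= split_rshift.
Qed.

Lemma id_ok n : in_FinCorel_circ (corel_id n).
Proof.
split.
  split; first by move=> x; rewrite /corel_id.
  split; first by move=> x y; rewrite /corel_id eq_sym.
  by move=> y x z; rewrite /corel_id => /eqP -> .
move=> x; split.
  apply: (card1_intro (i := id_label x)); first by rewrite /corel_id.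
  by move=> k; rewrite /corel_id /= => /eqP.
by exists (id_label x); rewrite /corel_id.
Qed.

Lemma sym_ok m n : in_FinCorel_circ (corel_sym m n).
Proof.
split.
  split; first by move=> x; rewrite /corel_sym.
  split; first by move=> x y; rewrite /corel_sym eq_sym.
  by move=> y x z; rewrite /corel_sym => /eqP -> .
move=> x; split.
  apply: (card1_intro (i := unsplit (sym_label x))); first by rewrite /corel_sym /= unsplitK.
  by move=> k; rewrite /corel_sym /= => /eqP ->; rewrite splitK.
case hs: (sym_label x) => [a|b].
  exists (rshift n a); by rewrite /corel_sym /= split_rshift hs.
exists (lshift m b); by rewrite /corel_sym /= split_lshift hs.
Qed.

Theorem proposition2p12 :
  (forall (m n p : nat) (R : rel (corel_carrier m n)) (S : rel (corel_carrier n p)),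
      in_FinCorel_circ R -> in_FinCorel_circ S -> in_FinCorel_circ (corel_comp R S)) /\
  (forall (m n m' n' : nat) (R : rel (corel_carrier m n)) (R' : rel (corel_carrier m' n')),
      in_FinCorel_circ R -> in_FinCorel_circ R' -> in_FinCorel_circ (corel_tensor R R')) /\
  (forall n : nat, in_FinCorel_circ (corel_id n)) /\
  (forall m n : nat, in_FinCorel_circ (corel_sym m n)).
Proof.
split; first exact: comp_ok.
split; first exact: tensor_ok.
split; first exact: id_ok.
exact: sym_ok.
Qed.
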